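(* Let $R$ be a commutative noetherian ring, $A$ a finite $R$-algebra, $I$ an indecomposable injective $A$-module and $\mathfrak{p}=\alpha(I)$. For $r\in R$ let $\lambda_r^I\in\mathrm{End}_A(I)$ be multiplication by $r$. Then: (1) if $r\in\mathfrak{p}$, then $\lambda_r^I$ is locally nilpotent (for every $x\in I$ there is $n$ with $r^nx=0$); (2) if $r\in R\setminus\mathfrak{p}$, then $\lambda_r^I$ is invertible; (3) $\mathfrak{p}$ is the unique associated prime ideal of $I$ viewed as an $R$-module; (4) $\mathrm{Supp}(I)=\overline{\{\mathfrak{p}\}}\subset\mathrm{Spec}(R)$.
   Context: A finite $R$-algebra is a ring $A$ with an injective ring map $R\to Z(A)$ making $A$ a finitely generated $R$-module. For an indecomposable injective $A$-module $I$ there is a unique prime (two-sided) ideal $P$ of $A$ such that the injective envelope $E_A(A/P)$ is isomorphic to a finite direct sum of copies of $I$; $\alpha(I):=P\cap R$, a prime ideal of $R$. *)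

(* Defs.v *)
From HB Require Import structures.
From mathcomp Require Import all_boot all_order all_algebra.
Set Implicit Arguments. Unset Strict Implicit. Unset Printing Implicit Defensive.
Import GRing.Theory.
Local Open Scope ring_scope.

Definition two_sided_ideal (A : nzRingType) (J : A -> Prop) : Prop :=
  [/\ J 0, (forall x y, J x -> J y -> J (x + y)) &
      (forall a x, J x -> J (a * x) /\ J (x * a))].

(* prime two-sided ideal: proper, and X Y <= P implies X <= P or Y <= P
   for two-sided ideals X, Y (X Y <= P unfolds to x y \in P for x \in X, y \in Y) *)
Definition prime_two_sided_ideal (A : nzRingType) (P : A -> Prop) : Prop :=
  [/\ two_sided_ideal P, ~ P 1 &
      forall X Y : A -> Prop, two_sided_ideal X -> two_sided_ideal Y ->
        (forall x y, X x -> Y y -> P (x * y)) ->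
        (forall x, X x -> P x) \/ (forall y, Y y -> P y)].

Definition ideal_of (R : comNzRingType) (J : R -> Prop) : Prop :=
  [/\ J 0, (forall x y, J x -> J y -> J (x + y)) &
      (forall a x, J x -> J (a * x))].

Definition prime_ideal_of (R : comNzRingType) (J : R -> Prop) : Prop :=
  [/\ ideal_of J, ~ J 1 & forall x y, J (x * y) -> J x \/ J y].

Definition noetherian_ring (R : comNzRingType) : Prop :=
  forall J : R -> Prop, ideal_of J ->
    exists s : seq R, forall r, J r <->
      exists c : seq R, r = \sum_(i < size s) c`_i * s`_i.

Definition finite_algebra (R : comNzRingType) (A : nzRingType)
    (f : {rmorphism R -> A}) : Prop :=
  [/\ injective f, (forall r a, f r * a = a * f r) &
      exists s : seq A, forall a, exists c : seq R,
        a = \sum_(i < size s) f c`_i * s`_i].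

Definition Alin (A : nzRingType) (M N : lmodType A) (g : M -> N) : Prop :=
  forall (a : A) (u v : M), g (a *: u + v) = a *: g u + g v.

Definition submodule (A : nzRingType) (M : lmodType A) (S : M -> Prop) : Prop :=
  S 0 /\ forall (a : A) (u v : M), S u -> S v -> S (a *: u + v).

Definition injective_module (A : nzRingType) (E : lmodType A) : Prop :=
  forall (M N : lmodType A) (g : M -> N) (h : M -> E),
    Alin g -> injective g -> Alin h ->
    exists k : N -> E, Alin k /\ forall m, k (g m) = h m.

Definition indecomposable_module (A : nzRingType) (M : lmodType A) : Prop :=
  (exists x : M, x != 0) /\
  forall U V : M -> Prop, submodule U -> submodule V ->
    (forall x, U x -> V x -> x = 0) ->
    (forall x, exists u v, [/\ U u, V v & x = u + v]) ->
    (forall x, U x -> x = 0) \/ (forall x, V x -> x = 0).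

Definition injective_envelope (A : nzRingType) (Q E : lmodType A)
    (j : Q -> E) : Prop :=
  [/\ injective_module E, Alin j, injective j &
      forall U : E -> Prop, submodule U -> (exists u, U u /\ u != 0) ->
        exists q, U (j q) /\ j q != 0].

(* Q is (a model of) the cyclic left module A/P, via the surjection pi *)
Definition quotient_model (A : nzRingType) (P : A -> Prop) (Q : lmodType A)
    (pi : A -> Q) : Prop :=
  [/\ forall a b c : A, pi (a * b + c) = a *: pi b + pi c,
      (forall q, exists a, pi a = q) &
      forall a, pi a = 0 <-> P a].

(* P is the prime ideal attached to I: E_A(A/P) is isomorphic to I^n *)
Definition attached_prime (A : nzRingType) (I : lmodType A) (P : A -> Prop) : Prop :=
  prime_two_sided_ideal P /\
  exists (n : nat) (Q : lmodType A) (pi : A -> Q) (j : Q -> {ffun 'I_n -> I}),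
    quotient_model P pi /\ injective_envelope j.

Definition Rann (R : comNzRingType) (A : nzRingType) (f : {rmorphism R -> A})
    (M : lmodType A) (x : M) : R -> Prop :=
  fun r => f r *: x = 0.

Definition associated_prime (R : comNzRingType) (A : nzRingType)
    (f : {rmorphism R -> A}) (M : lmodType A) (q : R -> Prop) : Prop :=
  prime_ideal_of q /\ exists x : M, forall r, q r <-> Rann f x r.

(* q is in Supp(M): the localization M_q is nonzero, i.e. some x/s is nonzero,
   where x/s = 0 in M_q iff t x = 0 for some t outside q *)
Definition in_support (R : comNzRingType) (A : nzRingType)
    (f : {rmorphism R -> A}) (M : lmodType A) (q : R -> Prop) : Prop :=
  prime_ideal_of q /\
  exists (x : M) (s : R), ~ q s /\ ~ (exists t, ~ q t /\ f t *: x = 0).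

(* Zariski closure of a set S of primes: the primes q lying in every closed set
   V(J) containing S *)
Definition zariski_closure (R : comNzRingType) (S : (R -> Prop) -> Prop)
    (q : R -> Prop) : Prop :=
  prime_ideal_of q /\
  forall J : R -> Prop, ideal_of J ->
    (forall p, S p -> forall r, J r -> p r) -> forall r, J r -> q r.

(* Main.v *)
Require Import Defs.
From HB Require Import structures.
From mathcomp Require Import all_boot all_order all_algebra.
From Stdlib Require Import Classical.
Import GRing.Theory.
Set Implicit Arguments. Unset Strict Implicit.
Local Open Scope ring_scope.


Lemma central_prime (A : nzRingType) (P : A -> Prop) (u a : A) :
  prime_two_sided_ideal P -> (forall b, u * b = b * u) ->
  P (u * a) -> ~ P u -> P a.
Proof.
case=> [[P0 PD PM] P1 Pp] uc Pua Pu.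
pose X := fun b : A => exists c, b = c * u.
pose Y := fun b : A => forall c, P (u * c * b).
have hX : two_sided_ideal X.
  split; first by exists 0; rewrite mul0r.
  - by move=> x y [c ->] [d ->]; exists (c + d); rewrite mulrDl.
  - move=> b x [c ->]; split; first by exists (b * c); rewrite mulrA.
    by exists (c * b); rewrite -mulrA uc mulrA.
have hY : two_sided_ideal Y.
  split; first by move=> c; rewrite mulr0.
  - by move=> x y hx hy c; rewrite mulrDr; apply: PD.
  - move=> b x hx; split=> c; first by rewrite mulrA -(mulrA u); apply: hx.
    by rewrite mulrA; case: (PM b _ (hx c)).
have := Pp X Y hX hY.
case.
- move=> x y [c ->] hy; have := hy 1; rewrite mulr1 => h.
  by rewrite -mulrA; case: (PM c _ h).
- by move=> h; exfalso; apply: Pu; apply: h; exists 1; rewrite mul1r.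
- move=> h; apply: h => c; rewrite uc -mulrA.
  by case: (PM c _ Pua).
Qed.


Lemma nth_delta (R : nzRingType) (i j : nat) :
  (nseq i (0 : R) ++ [:: 1])`_j = (j == i)%:R.
Proof.
rewrite nth_cat size_nseq; case: ltngtP => h.
- by rewrite nth_nseq h.
- by case: (j - i)%N (subn_gt0 i j) => [|k]; rewrite ?h // => _; rewrite /= nth_nil.
- by rewrite h subnn.
Qed.

Lemma sum_delta (R : comNzRingType) (s : seq R) (i : nat) : (i < size s)%N ->
  \sum_(j < size s) (nseq i 0 ++ [:: 1])`_j * s`_j = s`_i.
Proof.
move=> Hi; rewrite (bigD1 (Ordinal Hi)) //= nth_delta eqxx mul1r big1 ?addr0 //.
move=> j hj; rewrite nth_delta.
have -> : (nat_of_ord j == i) = false.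
  by apply/negbTE; apply: contra hj => /eqP e; apply/eqP; apply: val_inj.
by rewrite mul0r.
Qed.

Lemma ideal_mono (R : Type) (C : nat -> R -> Prop) :
  (forall k r, C k r -> C k.+1 r) -> forall k l, (k <= l)%N -> forall r, C k r -> C l r.
Proof.
move=> inc k l /subnK <-; elim: (l - k)%N => [|m IH] r h //.
by rewrite addSn; apply: inc; apply: IH.
Qed.

Lemma ideal_acc (R : comNzRingType) (C : nat -> R -> Prop) :
  noetherian_ring R -> (forall k, ideal_of (C k)) ->
  (forall k r, C k r -> C k.+1 r) -> exists N, forall k r, C k r -> C N r.
Proof.
move=> noeth idC inc.
have mono := @ideal_mono R C inc.
pose U := fun r => exists k, C k r.
have idU : ideal_of U.
  split; first by exists 0%N; case: (idC 0%N).
  - move=> x y [k hx] [l hy]; exists (maxn k l).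
    case: (idC (maxn k l)) => _ hD _; apply: hD.
    + by apply: (mono k) => //; apply: leq_maxl.
    + by apply: (mono l) => //; apply: leq_maxr.
  - by move=> a x [k hx]; exists k; case: (idC k) => _ _; apply.
have [s hs] := noeth U idU.
have sU : forall i, (i < size s)%N -> U s`_i.
  move=> i Hi; apply/hs; exists (nseq i 0 ++ [:: 1]).
  by rewrite sum_delta.
have : forall m, (m <= size s)%N -> exists N, forall i, (i < m)%N -> C N s`_i.
  elim=> [|m IH] hm; first by exists 0%N.
  have [N HN] := IH (ltnW hm).
  have [k hk] := sU m hm.
  exists (maxn N k) => i; rewrite ltnS leq_eqVlt; case/orP=> [/eqP ->|hi].
  - by apply: (mono k) => //; apply: leq_maxr.
  - by apply: (mono N); [apply: leq_maxl | apply: HN].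
move=> /(_ (size s) (leqnn _)) [N HN].
exists N => k r hr.
have [c ->] : exists c : seq R, r = \sum_(i < size s) c`_i * s`_i.
  by apply/hs; exists k.
case: (idC N) => h0 hD hM.
apply: (big_ind (C N)) => // i _.
by apply: hM; apply: HN.
Qed.


Fixpoint spanR (R : comNzRingType) (A : nzRingType) (f : {rmorphism R -> A})
  (E : lmodType A) (s : seq E) (e : E) : Prop :=
  match s with
  | [::] => e = 0
  | m :: s' => exists c e', spanR f s' e' /\ e = f c *: m + e'
  end.

Definition Rsub (R : comNzRingType) (A : nzRingType) (f : {rmorphism R -> A})
  (E : lmodType A) (K : E -> Prop) : Prop :=
  [/\ K 0, forall x y, K x -> K y -> K (x + y) & forall c x, K x -> K (f c *: x)].

Lemma spanR_sub (R : comNzRingType) (A : nzRingType) (f : {rmorphism R -> A})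
  (E : lmodType A) (s : seq E) : Rsub f (spanR f s).
Proof.
elim: s => [|m s [h0 hD hZ]] /=.
  by split=> [//|x y -> ->|c x ->]; rewrite ?addr0 ?scaler0.
split.
- by exists 0, 0; rewrite rmorph0 scale0r addr0.
- move=> x y [c [e [he ->]]] [d [e' [he' ->]]].
  exists (c + d), (e + e'); split; first by apply: hD.
  by rewrite rmorphD scalerDl addrACA.
- move=> a x [c [e [he ->]]]; exists (a * c), (f a *: e); split; first by apply: hZ.
  by rewrite scalerDr scalerA rmorphM.
Qed.

Lemma Rsub_opp (R : comNzRingType) (A : nzRingType) (f : {rmorphism R -> A})
  (E : lmodType A) (K : E -> Prop) x : Rsub f K -> K x -> K (- x).
Proof.
by case=> _ _ hZ hx; rewrite -scaleN1r -(rmorphN1 f); apply: hZ.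
Qed.

Lemma mod_acc (R : comNzRingType) (A : nzRingType) (f : {rmorphism R -> A})
  (E : lmodType A) : noetherian_ring R ->
  forall (s : seq E) (K : nat -> E -> Prop), (forall k, Rsub f (K k)) ->
  (forall k x, K k x -> K k.+1 x) -> (forall k x, K k x -> spanR f s x) ->
  exists N, forall k x, K k x -> K N x.
Proof.
move=> noeth; elim=> [|m s IH] K hK inc hs.
  exists 0%N => k x /hs /= ->; by case: (hK 0%N).
have monoK := @ideal_mono E K inc.
have [s0 sD sZ] := spanR_sub f s.
pose C := fun k c => exists e', spanR f s e' /\ K k (f c *: m + e').
have [N1 HN1] : exists N, forall k c, C k c -> C N c.
  apply: ideal_acc => //.
  - move=> k; have [k0 kD kZ] := hK k; split.
    + by exists 0; rewrite rmorph0 scale0r addr0.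
    + move=> x y [e [he hx]] [e' [he' hy]]; exists (e + e'); split; first by apply: sD.
      by rewrite rmorphD scalerDl addrACA; apply: kD.
    + move=> a x [e [he hx]]; exists (f a *: e); split; first by apply: sZ.
      by rewrite rmorphM -scalerA -scalerDr; apply: kZ.
  - by move=> k c [e [he hx]]; exists e; split => //; apply: inc.
pose K' := fun k x => K k x /\ spanR f s x.
have [N2 HN2] : exists N, forall k x, K' k x -> K' N x.
  apply: IH.
  - move=> k; have [k0 kD kZ] := hK k; split.
    + by split.
    + by move=> x y [? ?] [? ?]; split; [apply: kD | apply: sD].
    + by move=> c x [? ?]; split; [apply: kZ | apply: sZ].
  - by move=> k x [? ?]; split => //; apply: inc.
  - by move=> k x [].
have monoC := @ideal_mono R C (fun k c '(ex_intro e (conj he hx)) =>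
   ex_intro _ e (conj he (inc k _ hx))).
exists (maxn N1 N2) => k x hx.
case: (leqP k (maxn N1 N2)) => hk; first by apply: monoK hk _ hx.
have [c [e [he xe]]] := hs k x hx.
have [e'' [he'' hN]] : C (maxn N1 N2) c.
  apply: (monoC N1 _ (leq_maxl _ _)); apply: (HN1 k); exists e; split => //.
  by rewrite -xe.
have hKk : K k (f c *: m + e'') by apply: monoK hN; apply: ltnW.
have [k0 kD kZ] := hK k.
have hd : K' k (x - (f c *: m + e'')).
  split; first by apply: kD => //; apply: Rsub_opp.
  rewrite xe opprD addrACA subrr add0r; apply: sD => //; apply: Rsub_opp => //.
  exact: spanR_sub.
have [hd' _] := HN2 _ _ hd.
have hd2 : K (maxn N1 N2) (x - (f c *: m + e'')) by apply: (monoK N2) => //; apply: leq_maxr.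
have [_ mD _] := hK (maxn N1 N2).
by rewrite -(subrK (f c *: m + e'') x); apply: mD.
Qed.


Lemma Alin0 (A : nzRingType) (M N : lmodType A) (g : M -> N) : Alin g -> g 0 = 0.
Proof.
move=> hg; have := hg 1 0 0; rewrite scaler0 addr0 scale1r => h.
by apply/esym; apply: (@addrI _ (g 0)); rewrite addr0.
Qed.

Lemma AlinZ (A : nzRingType) (M N : lmodType A) (g : M -> N) a u :
  Alin g -> g (a *: u) = a *: g u.
Proof. by move=> hg; have := hg a u 0; rewrite !addr0 (Alin0 hg) addr0. Qed.

Lemma spanR_comb (R : comNzRingType) (A : nzRingType) (f : {rmorphism R -> A})
  (E : lmodType A) (z : E) (sA : seq A) (c : seq R) :
  spanR f (map (fun b => b *: z) sA) ((\sum_(i < size sA) f c`_i * sA`_i) *: z).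
Proof.
elim: sA c => [|b s IH] c /=; first by rewrite big_ord0 scale0r.
rewrite big_ord_recl /=; exists c`_0, ((\sum_(i < size s) f (behead c)`_i * s`_i) *: z).
split; first exact: IH.
rewrite scalerDl scalerA; congr (_ + _); congr (_ *: _).
by apply: eq_bigr => i _; rewrite nth_behead.
Qed.

Unset Implicit Arguments.


Theorem proposition3p8 (R : comNzRingType) (A : nzRingType)
    (f : {rmorphism R -> A}) (I : lmodType A) (P : A -> Prop) :
  noetherian_ring R -> finite_algebra f ->
  injective_module I -> indecomposable_module I ->
  attached_prime I P ->
  let p : R -> Prop := fun r => P (f r) in
  [/\ (forall r, p r -> forall x : I, exists n : nat, f r ^+ n *: x = 0),
      (forall r, ~ p r ->
         exists g : I -> I, [/\ Alin g, cancel (fun x => f r *: x) g &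
                                cancel g (fun x => f r *: x)]),
      (forall q : R -> Prop, associated_prime f I q <-> (forall r, q r <-> p r)) &
      (forall q : R -> Prop,
         in_support f I q <-> zariski_closure (fun q' => forall r, q' r <-> p r) q)].
Proof.
move=> noeth [finj fcen [sA hsA]] Iinj _ [Pprime [n [Q [pi [j [[piM pisurj pi0]
  [_ jlin jinj jess]]]]]]] p.
have [[P0 PD PM] P1 _] := Pprime.
pose E := {ffun 'I_n -> I}.
have j0 : j 0 = 0 := Alin0 jlin.
have pi00 : pi 0 = 0 by apply/pi0.
have piZ : forall a b, pi (a * b) = a *: pi b.
  by move=> a b; have := piM a b 0; rewrite !addr0 pi00 addr0.
have fcz : forall r (e : E) a, a *: (f r *: e) = f r *: (a *: e).
  by move=> r e a; rewrite !scalerA fcen.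
have killP : forall r, p r -> forall q : Q, f r *: q = 0.
  move=> r pr q; have [a <-] := pisurj q; rewrite -piZ; apply/pi0.
  by case: (PM a (f r) pr).
have jnz : j (pi 1) != 0.
  apply/eqP; rewrite -j0 => /jinj /pi0; exact: P1.
have [i0 hi0] : exists i, (j (pi 1)) i != 0.
  apply: NNPP => hn; move/eqP: jnz; apply; apply/ffunP => i; rewrite ffunE.
  by case: (eqVneq ((j (pi 1)) i) 0) => // h; exfalso; apply: hn; exists i.
set y := (j (pi 1)) i0 in hi0.
have injt : forall t, ~ p t -> forall x : I, f t *: x = 0 -> x = 0.
  move=> t pt x hx; apply: NNPP => /eqP xnz.
  pose z : E := [ffun _ => x].
  pose U := fun e : E => f t *: e = 0.
  have subU : submodule U.
    split; first by rewrite /U scaler0.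
    by move=> a u v hu hv; rewrite /U scalerDr -fcz hu hv scaler0 addr0.
  have [q [hq jq]] : exists q, U (j q) /\ j q != 0.
    apply: jess => //; exists z; split.
      by apply/ffunP => i; rewrite /U !ffunE hx.
    by apply/eqP => /ffunP /(_ i0); rewrite !ffunE; apply/eqP.
  have [a ea] := pisurj q; subst q.
  move: hq; rewrite /U -(AlinZ _ _ jlin) -piZ -j0 => /jinj /pi0 hPa.
  have Pa : P a := central_prime Pprime (fcen t) hPa pt.
  by move/eqP: jq; apply; have -> : pi a = 0 by apply/pi0.
have part1 : forall r, p r -> forall x : I, exists n : nat, f r ^+ n *: x = 0.
  move=> r pr x.
  pose z : E := [ffun _ => x].
  pose S := map (fun b => b *: z) sA.
  have spanAz : forall a, spanR f S (a *: z).
    by move=> a; have [c ->] := hsA a; apply: spanR_comb.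
  pose K := fun k (e : E) => spanR f S e /\ f r ^+ k *: e = 0.
  have [N HN] : exists N, forall k e, K k e -> K N e.
    apply: (mod_acc noeth (s := S)).
    - move=> k; have [s0 sD sZ] := spanR_sub f S; split.
      + by split => //; rewrite scaler0.
      + by move=> u v [hu1 hu2] [hv1 hv2]; split; [apply: sD | rewrite scalerDr hu2 hv2 addr0].
      + move=> c u [hu1 hu2]; split; first by apply: sZ.
        by rewrite scalerA -rmorphXn -rmorphM mulrC rmorphM -scalerA rmorphXn hu2 scaler0.
    - by move=> k e [h1 h2]; split => //; rewrite exprS -scalerA h2 scaler0.
    - by move=> k e [].
  pose W := fun e : E => exists a, e = f r ^+ N *: (a *: z).
  have subW : submodule W.
    split; first by exists 0; rewrite scale0r scaler0.
    move=> b u v [a ->] [a' ->]; exists (b * a + a').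
    by rewrite -rmorphXn fcz -scalerDr scalerDl scalerA.
  exists N; apply: NNPP => hnz.
  have [q [[a hq] jq]] : exists q, W (j q) /\ j q != 0.
    apply: jess => //; exists (f r ^+ N *: (1 *: z)); split; first by exists 1.
    by apply/eqP => /ffunP /(_ i0); rewrite !ffunE scale1r; exact: hnz.
  have : K N.+1 (a *: z).
    split; first exact: spanAz.
    by rewrite exprS -scalerA -hq -(AlinZ _ _ jlin) killP // j0.
  move=> /HN [_ h]; move/eqP: jq; apply; by rewrite hq.
have part2 : forall r, ~ p r -> exists g : I -> I, [/\ Alin g,
    cancel (fun x => f r *: x) g & cancel g (fun x => f r *: x)].
  move=> t pt.
  have lin : Alin (fun x : I => f t *: x).
    by move=> a u v; rewrite scalerDr !scalerA fcen.
  have inj : injective (fun x : I => f t *: x).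
    move=> u v /eqP; rewrite -subr_eq0 -scalerBr => /eqP /(injt t pt) /eqP.
    by rewrite subr_eq0 => /eqP.
  have [k [klin hk]] := Iinj I I _ id lin inj (fun a u v => erefl).
  exists k; split => // x /=.
  by rewrite -(AlinZ _ _ klin) hk.
have pprime : prime_ideal_of p.
  split.
  - split; first by rewrite /p rmorph0.
    + by move=> x y' hx hy; rewrite /p rmorphD; apply: PD.
    + by move=> a x hx; rewrite /p rmorphM; case: (PM (f a) _ hx).
  - by rewrite /p rmorph1.
  - move=> x y'; rewrite /p rmorphM => h.
    case: (classic (P (f x))) => hx; [by left | right].
    exact: (central_prime Pprime (fcen x)).
have pow_prime : forall q : R -> Prop, prime_ideal_of q -> forall r m, q (r ^+ m) -> q r.
  move=> q [_ q1 qp] r; elim=> [|m IH]; first by rewrite expr0.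
  by rewrite exprS => /qp [|/IH].
have hy : forall r, p r <-> f r *: y = 0.
  move=> r; split.
  - move=> pr; have h : f r *: j (pi 1) = 0.
      by rewrite -(AlinZ _ _ jlin) -piZ mulr1 (proj2 (pi0 _) pr) j0.
    by move/ffunP: h => /(_ i0); rewrite !ffunE.
  - move=> h; apply: NNPP => pr; move/eqP: hi0; apply; exact: (injt r pr).
split => //.
- move=> q; split.
  + move=> [qprime [x hx]] r; split.
    * move=> /hx hr; apply: NNPP => pr.
      have [_ q1 _] := qprime; apply: q1; apply/hx.
      by rewrite /Rann (injt r pr x hr) scaler0.
    * move=> pr; have [m hm] := part1 r pr x.
      by apply: (pow_prime q qprime r m); apply/hx; rewrite /Rann rmorphXn.
  + move=> hq; split.
    * have [[q0 qD qM] q1 qp] := pprime; split.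
      -- split; first by apply/hq.
         ++ by move=> u v /hq hu /hq hv; apply/hq; apply: qD.
         ++ by move=> a u /hq hu; apply/hq; apply: qM.
      -- by move/hq.
      -- by move=> u v /hq /qp [] h; [left|right]; apply/hq.
    * by exists y => r; rewrite hq; apply: hy.
- move=> q; split.
  + move=> [qprime [x [s [qs hx]]]]; split => // J idJ hJ r Jr.
    have Jp : forall r, J r -> p r by apply: hJ.
    have [m hm] := part1 r (Jp r Jr) x.
    apply: (pow_prime q qprime r m); apply: NNPP => hq; apply: hx.
    by exists (r ^+ m); split => //; rewrite rmorphXn.
  + move=> [qprime hcl]; split => //.
    have pq : forall r, p r -> q r.
      apply: hcl => //; first by case: pprime.
      by move=> p' hp' r; rewrite hp'.
    exists y, 1; split; first by case: qprime.
    move=> [t [qt ht]]; move/eqP: hi0; apply.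
    apply: (injt t) => // pt; exact: qt (pq t pt).
Qed.
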